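(* Let $u$ and $v$ be vertices of $T$ such that $v$ is not a vertex of $T^u$. Let $X$ be the set of vertices in $C_{T^u}$ that are ancestors of $v$. Suppose $X\neq\emptyset$ and let $x$ be the last vertex on the path in $T$ from $u$ to $v$ that is contained in $T^u$. Then $x\in X$, and $x$ is the deepest vertex of $X$.
   Context: Let $T$ be a rooted tree on $n$ vertices with positive edge weights. Ancestor/descendant refer to $T$, and a vertex counts as its own ancestor and descendant. $T_v$ denotes the subtree of $T$ rooted at $v$. For every non-leaf vertex $v$ of $T$ fix a child $c_1(v)$ with $|T_{c_1(v)}|$ maximal among the children of $v$; the edges $(v,c_1(v))$ are called leftmost. A subtree $R$ of $T$ (connected subgraph) is rooted at its vertex closest to the root of $T$, denoted $rt(R)$, and inherits the leftmost labelling; $R_v$ is the subtree of $R$ rooted at $v$. For $v\in V(R)$, $P_R(v)$ is the longest downward path from $v$ in $R$ using only leftmost edges; its last vertex is $l(v)$, and $l(R):=l(rt(R))$. For an integer $d$, a vertex $v$ of $R$ is $d$-balanced (in $R$) if $|R_{c_1(v)}|\le |R|-d$ (where $|R_{c_1(v)}|=0$ if $c_1(v)$ is undefined or not in $R$). $b_d(v)$ is the first $d$-balanced vertex on $P_R(v)$, or NULL if none. Define $CV(R,d)=\emptyset$ if $b_d(rt(R))$ is NULL, and otherwise, with $b=b_d(rt(R))$, $CV(R,d)=\{b\}\cup\bigcup_{w}CV(R_w,d)$, the union over the children $w$ of $b$ in $R$. Fix an integer $k\ge 4$. For a subtree $R$ with $m$ vertices, $C_R:=V(R)$ if $k\ge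 m/2-1$, and otherwise $C_R:=CV(R,m/k)\cup\{l(R),rt(R)\}$. Canonical subtrees: $T$ is canonical; if $R$ is canonical, every connected component of the forest obtained from $R$ by deleting the vertices of $C_R$ (and incident edges) is canonical. Every vertex $v$ of $T$ belongs to $C_R$ for exactly one canonical subtree $R$, denoted $T^v$. *)

(* Defs.v *)
From HB Require Import structures.
From mathcomp Require Import all_boot all_order all_algebra.
Set Implicit Arguments. Unset Strict Implicit. Unset Printing Implicit Defensive.
Import Order.TTheory GRing.Theory Num.Theory.

(* A rooted tree on the finite vertex type T is given by a parent map [par]
   and a root [root] (par root = root).  Edge weights play no role in the
   statement and are omitted.  [c1 v] is the fixed leftmost child of v. *)

Section TreeDefs.
Variable T : finType.
Variable par : T -> T.
Variable root : T.
Variable c1 : T -> T.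

Definition anc (a v : T) : bool := connect (frel par) v a.

Definition is_tree : Prop := par root = root /\ forall v, anc root v.

Definition is_child (w v : T) : bool := (par w == v) && (w != v).
Definition has_child (v : T) : bool := [exists w, is_child w v].

Definition Tsub (v : T) : {set T} := [set w | anc v w].

Definition leftmost_ok : Prop :=
  forall v, has_child v ->
    is_child (c1 v) v /\ forall w, is_child w v -> #|Tsub w| <= #|Tsub (c1 v)|.

Definition connected_sub (R : {set T}) : Prop :=
  exists2 r, r \in R & forall w, w \in R ->
    anc r w /\ forall a, anc a w -> anc r a -> a \in R.

Definition rt (R : {set T}) : T :=
  odflt root [pick r in R | [forall w in R, anc r w]].

Definition Rsub (R : {set T}) (v : T) : {set T} := [set w in R | anc v w].

Definition c1size (R : {set T}) (v : T) : nat :=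
  if has_child v && (c1 v \in R) then #|Rsub R (c1 v)| else 0.

Definition lstep (R : {set T}) (w : T) : T :=
  if has_child w && (c1 w \in R) then c1 w else w.

Definition Ppath (R : {set T}) (v : T) : seq T :=
  undup (traject (lstep R) v #|T|.+1).

Definition lv (R : {set T}) (v : T) : T := last v (Ppath R v).
Definition lR (R : {set T}) : T := lv R (rt R).

Definition balanced (d : rat) (R : {set T}) (v : T) : bool :=
  ((c1size R v)%:R <= (#|R|)%:R - d)%R.

Definition bd (d : rat) (R : {set T}) (v : T) : option T :=
  ohead [seq w <- Ppath R v | balanced d R w].

Definition children_in (R : {set T}) (b : T) : {set T} :=
  [set w in R | is_child w b].

Fixpoint CVf (d : rat) (n : nat) (R : {set T}) : {set T} :=
  match n with
  | 0 => set0
  | n'.+1 =>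
      match bd d R (rt R) with
      | None => set0
      | Some b => b |: \bigcup_(w in children_in R b) CVf d n' (Rsub R w)
      end
  end.

(* CV(R,d); the fuel #|T|.+1 exceeds the recursion depth *)
Definition CV (R : {set T}) (d : rat) : {set T} := CVf d #|T|.+1 R.

Definition CR (k : nat) (R : {set T}) : {set T} :=
  let m := #|R| in
  if ((m%:R / 2%:R - 1 : rat) <= k%:R)%R then R
  else CV R (m%:R / k%:R) :|: [set lR R; rt R].

Definition is_component (F S : {set T}) : Prop :=
  [/\ connected_sub S, S \subset F &
      forall S', connected_sub S' -> S \subset S' -> S' \subset F -> S' = S].

Inductive canonical (k : nat) : {set T} -> Prop :=
| canonical_T : canonical k [set: T]
| canonical_comp R S : canonical k R -> is_component (R :\: CR k R) S ->
    canonical k S.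

Definition anc_seq (v : T) : seq T := undup (traject par v #|T|).
Definition depth (v : T) : nat := (size (anc_seq v)).-1.

Definition lca (u v : T) : T :=
  nth root (anc_seq u) (find (fun w => w \in anc_seq v) (anc_seq u)).

Definition tpath (u v : T) : seq T :=
  let a := lca u v in
  take (index a (anc_seq u)).+1 (anc_seq u)
  ++ rev (take (index a (anc_seq v)) (anc_seq v)).

End TreeDefs.

(* Main.v *)
Require Import Defs.
From HB Require Import structures.
From mathcomp Require Import all_boot all_order all_algebra.
From mathcomp Require Import zify.
Set Implicit Arguments. Unset Strict Implicit. Unset Printing Implicit Defensive.

Section Basic.
Variable T : finType.
Variable par : T -> T.
Variable root : T.
Variable c1 : T -> T.
Hypothesis Htree : is_tree par root.
Hypothesis Hleft : leftmost_ok par c1.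

Local Notation anc := (anc par).

Lemma ancP a w : reflect (exists n, iter n par w = a) (anc a w).
Proof.
apply: (iffP idP).
  by move=> H; exists (findex par w a); exact: iter_findex.
by case=> n <-; exact: fconnect_iter.
Qed.

Lemma anc_refl a : anc a a.
Proof. exact: connect0. Qed.

Lemma anc_trans a b c : anc a b -> anc b c -> anc a c.
Proof. move=> H1 H2; exact: connect_trans H2 H1. Qed.

Lemma anc_par w : anc (par w) w.
Proof. by apply/ancP; exists 1. Qed.

Lemma iter_root n : iter n par root = root.
Proof. by elim: n => //= n ->; case: Htree. Qed.

Lemma anc_antisym a b : anc a b -> anc b a -> a = b.
Proof.
move=> /ancP [n Hn] /ancP [m Hm].
have Hb : iter (n + m) par b = b by rewrite addnC iterD Hn Hm.
case: (eqVneq a b) => // Hab.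
have p0 : 0 < n + m.
  rewrite lt0n addn_eq0; apply/negP => /andP [/eqP n0 _].
  by rewrite n0 /= in Hn; rewrite Hn eqxx in Hab.
have Hk : forall k, iter (k * (n + m)) par b = b.
  by elim=> [|k IH] //; rewrite mulSn iterD IH.
have [j Hj] : exists j, iter j par b = root by apply/ancP; case: Htree => _; apply.
have Hbr : b = root.
  rewrite -(Hk j) -Hj.
  have -> : j * (n + m) = (j * (n + m) - j) + j by rewrite subnK // leq_pmulr.
  by rewrite iterD Hj iter_root.
by rewrite -Hn Hbr iter_root.
Qed.

Lemma anc_total a b w : anc a w -> anc b w -> anc a b || anc b a.
Proof.
move=> /ancP [i Hi] /ancP [j Hj].
case: (leqP i j) => Hij.
  apply/orP; right; apply/ancP; exists (j - i).
  by rewrite -Hi -iterD subnK.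
apply/orP; left; apply/ancP; exists (i - j).
by rewrite -Hj -iterD subnK // ltnW.
Qed.

Lemma anc_step a c : anc a c -> a != c -> anc a (par c).
Proof.
move=> /ancP [[|n] Hn] Hac; first by rewrite -Hn eqxx in Hac.
by apply/ancP; exists n; rewrite -iterSr.
Qed.

Lemma child_exists a w : anc a w -> a != w ->
  exists c, [/\ par c = a, c != a & anc c w].
Proof.
move=> /ancP Hex Haw.
have Hex' : exists n, iter n par w == a by case: Hex => n Hn; exists n; apply/eqP.
case: (ex_minnP Hex') => n /eqP Hn Hmin.
case: n Hn Hmin => [|n] Hn Hmin; first by rewrite -Hn eqxx in Haw.
exists (iter n par w); split => //.
- apply/negP => /eqP E. by have := Hmin n; rewrite E eqxx ltnn => /(_ isT).
- exact: fconnect_iter.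
Qed.

Lemma is_childP c s : is_child par c s -> par c = s /\ c != s.
Proof. by case/andP => /eqP. Qed.

Lemma child_anc_eq c s x : par c = s -> c != s -> par x = s -> x != s ->
  anc x c -> x = c.
Proof.
move=> Hc Hcs Hx Hxs Hxc.
case: (eqVneq x c) => // Hne.
have := anc_step Hxc Hne; rewrite Hc => Hxs'.
have : anc s x by rewrite -Hx; exact: anc_par.
move=> Hsx; have E := anc_antisym Hxs' Hsx.
by rewrite E eqxx in Hxs.
Qed.


Lemma rt_eq (R : {set T}) w : w \in R -> (forall x, x \in R -> anc w x) ->
  rt par root R = w.
Proof.
move=> Hw Hall; rewrite /rt; case: pickP => [r /andP [Hr /forallP H] | H] /=.
  apply: anc_antisym; last exact: Hall.
  by have := H w; rewrite Hw.
have := H w; rewrite Hw /=; move/negbT/negP; case.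
by apply/forallP => x; apply/implyP; apply: Hall.
Qed.

Lemma connected_rt (R : {set T}) : connected_sub par R ->
  rt par root R \in R /\ forall w, w \in R ->
    anc (rt par root R) w /\ forall a, anc a w -> anc (rt par root R) a -> a \in R.
Proof.
case=> r Hr H; rewrite (rt_eq Hr) //; by move=> x /H [].
Qed.

Lemma Rsub_rt (R : {set T}) w : w \in R -> rt par root (Rsub par R w) = w.
Proof.
move=> Hw; apply: rt_eq; first by rewrite inE Hw anc_refl.
by move=> x; rewrite inE => /andP [].
Qed.

Definition leftchain t c := forall a, anc t a -> anc a c -> a != c -> anc (c1 a) c.

Lemma has_child_of c s : par c = s -> c != s -> has_child par s.
Proof. by move=> H1 H2; apply/existsP; exists c; rewrite /is_child H1 eqxx. Qed.

Lemma c1_child a : has_child par a -> par (c1 a) = a /\ c1 a != a.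
Proof. by move=> /Hleft [/is_childP]. Qed.

Lemma lstep_cases (R : {set T}) w :
  lstep par c1 R w = w \/ [/\ lstep par c1 R w = c1 w, c1 w \in R,
    par (c1 w) = w & c1 w != w].
Proof.
rewrite /lstep; case: ifP => [/andP [Hc Hin] | _]; last by left.
by right; have [H1 H2] := c1_child Hc; split.
Qed.

Lemma Ppath_chain (R : {set T}) x c : c \in Ppath par c1 R x ->
  anc x c /\ leftchain x c.
Proof.
rewrite /Ppath mem_undup => /trajectP [i _ ->].
elim: i => [|i [IH1 IH2]] /=.
  split; first exact: anc_refl.
  move=> a Hxa Hax Hne; by rewrite (anc_antisym Hax Hxa) eqxx in Hne.
set y := iter i _ x in IH1 IH2 *.
case: (lstep_cases R y) => [-> | [-> _ Hp Hne]]; first by split.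
have Hyc : anc y (c1 y) by rewrite -{1}Hp; exact: anc_par.
split; first exact: anc_trans IH1 Hyc.
move=> a Hxa Hac Hne'.
have Hay : anc a y by rewrite -Hp; exact: anc_step.
case: (eqVneq a y) => [-> | Hay']; first exact: anc_refl.
exact: anc_trans (IH2 a Hxa Hay Hay') Hyc.
Qed.

Lemma Ppath_sub (R : {set T}) x c : x \in R -> c \in Ppath par c1 R x -> c \in R.
Proof.
move=> Hx; rewrite /Ppath mem_undup => /trajectP [i _ ->].
elim: i => [|i IH] //=.
by case: (lstep_cases R (iter i (lstep par c1 R) x)) => [-> | [-> H _ _]].
Qed.

Lemma ohead_mem (s : seq T) b : ohead s = Some b -> b \in s.
Proof. by case: s => //= a s [->]; rewrite mem_head. Qed.

Lemma CVf_sub d n (R : {set T}) : rt par root R \in R ->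
  CVf par root c1 d n R \subset R.
Proof.
elim: n R => [|n IH] R Hrt /=; first exact: sub0set.
case Hb: (bd _ _ _ _ _) => [b|]; last exact: sub0set.
rewrite subUset; apply/andP; split.
  rewrite sub1set; apply: (Ppath_sub Hrt).
  by have := ohead_mem Hb; rewrite mem_filter => /andP [].
apply/bigcupsP => w; rewrite inE => /andP [Hw _].
apply: subset_trans (IH _ _) _; first by rewrite Rsub_rt // inE Hw anc_refl.
by apply/subsetP => x; rewrite inE => /andP [].
Qed.

Lemma CVf_struct d n (R : {set T}) c : c \in CVf par root c1 d n R ->
  exists t, [/\ anc t c, leftchain t c &
     (t = rt par root R \/ par t \in CVf par root c1 d n R)].
Proof.
elim: n R c => [|n IH] R c /=; first by rewrite inE.
case Hb: (bd _ _ _ _ _) => [b|]; last by rewrite inE.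
rewrite in_setU in_set1 => /orP [/eqP -> | ].
  have := ohead_mem Hb; rewrite mem_filter => /andP [_ /Ppath_chain [H1 H2]].
  by exists (rt par root R); split => //; left.
move=> /bigcupP [w]; rewrite inE => /andP [Hw Hwb] Hc.
have [t [H1 H2 H3]] := IH _ _ Hc.
exists t; split => //; right.
case: H3 => [Ht | Ht].
  rewrite Ht Rsub_rt // (proj1 (is_childP Hwb)).
  by rewrite in_setU in_set1 eqxx.
rewrite in_setU; apply/orP; right; apply/bigcupP; exists w => //.
by rewrite inE Hw.
Qed.


Lemma traject_fix (f : T -> T) y n : f y = y -> traject f y n = nseq n y.
Proof. by move=> Hy; elim: n => //= n <-; rewrite Hy. Qed.

Lemma undup_nseq (y : T) n : undup (nseq n.+1 y) = [:: y].
Proof. by elim: n => //= n IH; rewrite /= in IH; rewrite mem_head IH. Qed.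

Definition mA y := #|[set z | anc z y]|.

Lemma mA_lt y c : par c = y -> c != y -> mA y < mA c.
Proof.
move=> Hp Hne; apply: proper_card; apply/properP; split.
  apply/subsetP => z; rewrite !inE => Hz; apply: anc_trans Hz _.
  by rewrite -Hp; exact: anc_par.
exists c; rewrite !inE ?anc_refl //; apply/negP => H.
have : anc y c by rewrite -Hp; exact: anc_par.
by move=> H'; rewrite (anc_antisym H H') eqxx in Hne.
Qed.

Lemma lv_chain (S : {set T}) x s :
  anc x s ->
  (forall a, anc x a -> anc a s -> a != s ->
     [/\ has_child par a, c1 a \in S & anc (c1 a) s]) ->
  lstep par c1 S s = s ->
  lv par c1 S x = s.
Proof.
move=> Hxs Hch Hss.
set f := lstep par c1 S.
have Hinv : forall i, anc x (iter i f x) /\ anc (iter i f x) s.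
  elim=> [|i [H1 H2]] /=; first by split; [exact: anc_refl|].
  case: (eqVneq (iter i f x) s) => [-> | Hne]; first by rewrite /f Hss; split; [exact: Hxs|exact: anc_refl].
  have [Hc Hin Hcs] := Hch _ H1 H2 Hne.
  rewrite /f /lstep Hc Hin /=; split => //.
  apply: anc_trans H1 _; rewrite -{1}(proj1 (c1_child Hc)); exact: anc_par.
have Hstep : forall i, iter i f x != s -> iter i.+1 f x = c1 (iter i f x) /\
    par (c1 (iter i f x)) = iter i f x /\ c1 (iter i f x) != iter i f x.
  move=> i Hne; have [H1 H2] := Hinv i.
  have [Hc Hin _] := Hch _ H1 H2 Hne.
  by rewrite /= /f /lstep Hc Hin /=; have [? ?] := c1_child Hc.
have Hm : forall i, (forall j, j < i -> iter j f x != s) -> i < mA (iter i f x).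
  elim=> [|i IH] Hj.
    by rewrite /mA card_gt0; apply/set0Pn; exists x; rewrite inE anc_refl.
  have Hi := Hj i (ltnSn i).
  have [E [Hp Hne]] := Hstep i Hi.
  apply: leq_ltn_trans (IH (fun j Hj' => Hj j (ltnW Hj'))) _.
  by rewrite E; apply: mA_lt.
have [j Hj Hjs] : exists2 j, j < #|T|.+1 & iter j f x = s.
  case: (boolP (s \in traject f x #|T|.+1)) => [/trajectP [j Hj ->] | Hn].
    by exists j.
  suff: #|T|.+1 < mA (iter #|T|.+1 f x).
    by rewrite ltnNge (leq_trans (max_card _) (leqnSn _)).
  apply: Hm.
  move=> j Hj; apply/eqP => E; move/negP: Hn; apply; apply/trajectP.
  by exists j.
rewrite /lv /Ppath -/f -(subnK (ltnW Hj)) addnC trajectD Hjs (@traject_fix f s _ Hss).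
rewrite undup_cat.
have -> : #|T|.+1 - j = (#|T| - j).+1 by rewrite subSn.
by rewrite undup_nseq last_cat.
Qed.


Lemma canonical_conn k R : canonical par root c1 k R -> connected_sub par R.
Proof.
case=> [|R0 S _ [H _ _]] //.
exists root; first by rewrite inE.
move=> w _; split; first by case: Htree => _; apply.
by move=> a _ _; rewrite inE.
Qed.

Lemma lR_mem (R : {set T}) : rt par root R \in R -> lR par root c1 R \in R.
Proof.
move=> H; rewrite /lR /lv.
have := mem_last (rt par root R) (Ppath par c1 R (rt par root R)).
rewrite inE => /orP [/eqP -> //|]; exact: Ppath_sub.
Qed.

Lemma CR_sub k (R : {set T}) : connected_sub par R -> CR par root c1 k R \subset R.
Proof.
move=> /connected_rt [Hrt _]; rewrite /CR; case: ifP => _ //.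
rewrite subUset CVf_sub // subUset !sub1set Hrt lR_mem //.
Qed.

Lemma claim k R0 : canonical par root c1 k R0 ->
  forall s c, s \in R0 -> par c = s -> c != s -> c \notin R0 ->
  s \in CR par root c1 k R0.
Proof.
elim=> [|R S HR IH [HSc HSsub HSmax]] s c Hs Hp Hne HcS; first by rewrite inE in HcS.
set K := CR par root c1 k R in IH HSsub HSmax.
have connR := canonical_conn HR.
have [HrtR HrtRp] := connected_rt connR.
have [HrtS HrtSp] := connected_rt HSc.
set rR := rt par root R in HrtR HrtRp.
set rS := rt par root S in HrtS HrtSp *.
have HsRK : s \in R :\: K by apply: (subsetP HSsub).
move: (HsRK); rewrite inE => /andP [HsK HsR].
have Hsc : anc s c by rewrite -Hp; exact: anc_par.
have HcR : c \in R.
  by apply/negPn/negP => H; have := IH s c HsR Hp Hne H; rewrite (negbTE HsK).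
have HcrR : c != rR.
  apply/eqP => E; have := proj1 (HrtRp s HsR); rewrite -E => H.
  by rewrite (anc_antisym H Hsc) eqxx in Hne.
have HcK : c \in K.
  apply/negPn/negP => HcK.
  have : c |: S = S.
    apply: HSmax; last first.
      rewrite subUset HSsub andbT sub1set inE HcK; exact: HcR.
      exact: subsetUr.
    exists rS; first by rewrite in_setU HrtS orbT.
    move=> w; rewrite in_setU in_set1 => /orP [/eqP -> | Hw].
      split; first exact: anc_trans (proj1 (HrtSp s Hs)) Hsc.
      move=> a Hac HrSa; case: (eqVneq a c) => [-> | Hac']; first by rewrite setU11.
      rewrite in_setU (proj2 (HrtSp s Hs)) ?orbT //.
      by rewrite -Hp; apply: anc_step.
    have [H1 H2] := HrtSp w Hw; split => // a Ha1 Ha2.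
    by rewrite in_setU (H2 a Ha1 Ha2) orbT.
  by move=> E; move: HcS; rewrite -E setU11.
move: HcK HsK; rewrite /K /CR; case: ifP => Hif.
  by rewrite HsR.
set CVs := CV par root c1 R _.
move=> HcK HsK.
have [t [Htc Hlc Htop]] : exists t, [/\ anc t c, leftchain t c &
    (t = rR \/ par t \in CVs :|: [set lR par root c1 R; rR])].
  move: HcK; rewrite in_setU => /orP [HcV | ].
    have [t [H1 H2 H3]] := CVf_struct HcV.
    by exists t; split => //; case: H3 => H3; [left | right; rewrite in_setU H3].
  rewrite in_set2 => /orP [/eqP E | /eqP E]; last by rewrite E eqxx in HcrR.
  have := mem_last rR (Ppath par c1 R rR).
  rewrite inE => /orP [/eqP E' | Hin].
    by move: HcrR; rewrite E /lR /lv -/rR E' eqxx.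
  have [H1 H2] := Ppath_chain Hin.
  by exists rR; rewrite E /lR /lv -/rR; split => //; left.
have Htc' : t != c.
  apply/eqP => E; case: Htop => [Ht | Ht].
    by rewrite -E Ht eqxx in HcrR.
  by move: HsK; rewrite -Hp -E => /negP; apply.
have Hts : anc t s by rewrite -Hp; apply: anc_step.
have Hcs : c != s by [].
have Hsc' : s != c by rewrite eq_sym.
have Hhs : has_child par s := has_child_of Hp Hne.
have [Hp1 Hne1] := c1_child Hhs.
have Hc1s : c1 s = c.
  exact: child_anc_eq Hp Hne Hp1 Hne1 (Hlc s Hts Hsc Hsc').
have HtrS : anc t rS.
  case: Htop => [Ht | Ht].
    by rewrite Ht; apply: (proj1 (HrtRp rS _)); move: (subsetP HSsub _ HrtS); rewrite inE => /andP [].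
  case/orP: (anc_total Hts (proj1 (HrtSp s Hs))) => // HrSt.
  case: (eqVneq rS t) => [-> | Hne2]; first exact: anc_refl.
  have Hpt : par t \in S.
    apply: (proj2 (HrtSp s Hs)); first exact: anc_trans (anc_par t) Hts.
    exact: anc_step.
  move: (subsetP HSsub _ Hpt); rewrite inE /K /CR Hif => /andP [H _].
  by case/negP: H.
have HlS : lR par root c1 S = s.
  rewrite /lR -/rS; apply: lv_chain; first exact: (proj1 (HrtSp s Hs)).
    move=> a Ha1 Ha2 Ha3.
    have [c' [Hc'1 Hc'2 _]] := child_exists Ha2 Ha3.
    have Hha : has_child par a := has_child_of Hc'1 Hc'2.
    have [Hpa Hnea] := c1_child Hha.
    have Hac : a != c.
      apply/eqP => E; rewrite E in Ha2.
      by rewrite (anc_antisym Ha2 Hsc) eqxx in Hne.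
    have H1 := Hlc a (anc_trans HtrS Ha1) (anc_trans Ha2 Hsc) Hac.
    have Hc1c : c1 a != c.
      apply/eqP => E; move: Ha3; by rewrite -Hpa E Hp eqxx.
    have H2 : anc (c1 a) s by rewrite -Hp; apply: anc_step.
    split => //.
    apply: (proj2 (HrtSp s Hs)) => //.
    by apply: anc_trans Ha1 _; rewrite -{1}Hpa; exact: anc_par.
  by rewrite /lstep Hhs Hc1s (negbTE HcS).
rewrite /CR; case: ifP => _ //.
by rewrite in_setU in_set2 HlS eqxx orbT.
Qed.


Lemma anc_seq_mem y v : (y \in anc_seq par v) = anc y v.
Proof.
rewrite /anc_seq mem_undup; apply/trajectP/idP.
  by case=> i _ ->; exact: fconnect_iter.
move=> H; exists (findex par v y); last by rewrite iter_findex.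
exact: leq_trans (findex_max H) (max_card _).
Qed.

Definition rA := fun a b : T => anc b a.

Lemma rA_trans : transitive rA.
Proof. by move=> b a c H1 H2; rewrite /rA; exact: anc_trans H2 H1. Qed.

Lemma anc_seq_sorted v : sorted rA (anc_seq par v).
Proof.
apply: (subseq_sorted rA_trans (undup_subseq _)).
case: #|T| => [|n] //=.
apply: sub_path (fpath_traject par v n).
by move=> a b /eqP <-; rewrite /rA; exact: anc_par.
Qed.

Lemma depth_le y x : anc y x -> depth par y <= depth par x.
Proof.
move=> H; rewrite /depth -!subn1 leq_sub2r //.
apply: uniq_leq_size; first exact: undup_uniq.
move=> z; rewrite !anc_seq_mem => Hz; exact: anc_trans Hz H.
Qed.

End Basic.

Theorem lemma5 (T : finType) (par : T -> T) (root : T) (c1 : T -> T)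
    (k : nat) (u v : T) (R : {set T}) :
  is_tree par root -> leftmost_ok par c1 -> 4 <= k ->
  canonical par root c1 k R -> u \in CR par root c1 k R ->
  v \notin R ->
  let X := [set y in CR par root c1 k R | anc par y v] in
  X != set0 ->
  let x := last u [seq w <- tpath par root u v | w \in R] in
  x \in X /\ (forall y, y \in X -> depth par y <= depth par x).
Proof.
move=> Htree Hleft _ Hcan Hu HvR X HX x.
have connR := canonical_conn Htree Hcan.
have HCR := CR_sub Htree Hleft k connR.
have HuR : u \in R := subsetP HCR _ Hu.
have [y0 Hy0] := set0Pn _ HX.
move: Hy0; rewrite inE => /andP [Hy0C Hy0v].
have Hy0R : y0 \in R := subsetP HCR _ Hy0C.
set M := anc_seq par v.
set p := fun w : T => w \in R.
have HpM : has p M by apply/hasP; exists y0; rewrite // /M anc_seq_mem.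
set i0 := find p M.
have Hi0 : i0 < size M by rewrite -has_find.
set b := nth root M i0.
have HbR : b \in R := nth_find root HpM.
have HbM : b \in M by rewrite /b mem_nth.
have Hbv : anc par b v by rewrite -anc_seq_mem.
have Hsort := anc_seq_sorted par v.
have Hdeep : forall y, y \in R -> anc par y v -> anc par y b.
  move=> y HyR Hyv; have HyM : y \in M by rewrite /M anc_seq_mem.
  have Hj : index y M < size M by rewrite index_mem.
  case: (ltngtP (index y M) i0) => Hc.
  - by have := before_find root Hc; rewrite nth_index // /p HyR.
  - have := sorted_ltn_nth (@rA_trans _ par) root Hsort _ _ Hi0 Hj Hc.
    by rewrite nth_index.
  - by rewrite /b -Hc nth_index //; exact: anc_refl.
have Hxb : x = b.
  rewrite /x /tpath.
  set L := anc_seq par u.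
  set a := lca par root u v.
  have HrL : root \in L by rewrite /L anc_seq_mem; case: Htree => _; apply.
  have HrM : root \in M by rewrite /M anc_seq_mem; case: Htree => _; apply.
  have HLM : has (fun w => w \in anc_seq par v) L by apply/hasP; exists root.
  have HaL : a \in L by rewrite /a /lca mem_nth // -has_find.
  have HaM : a \in M by exact: (nth_find root HLM).
  have Hau : anc par a u by rewrite -anc_seq_mem.
  set kk := index a M.
  have Hkk : kk < size M by rewrite index_mem.
  have HA : take (index a L).+1 L = rcons (take (index a L) L) a.
    by rewrite (take_nth root) ?index_mem // nth_index.
  rewrite -/M -/kk HA filter_cat filter_rev.
  case: (ltnP i0 kk) => Hik.
    have -> : take kk M = take i0 M ++ b :: take (kk - i0).-1 (drop i0.+1 M).
      rewrite -{1}(subnKC (ltnW Hik)) takeD (drop_nth root) //.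
      by case E: (kk - i0) => [|n]; [move: Hik; rewrite -subn_gt0 E | ].
    rewrite filter_cat /= HbR.
    have -> : [seq w <- take i0 M | w \in R] = [::].
      apply/eqP; move: (has_take i0 HpM); rewrite ltnn.
      by rewrite has_filter => /negbT; rewrite negbK.
    by rewrite /= rev_cons last_cat last_rcons.
  have -> : [seq w <- take kk M | w \in R] = [::].
    apply/eqP; move: (has_take kk HpM); rewrite ltnNge Hik /=.
    by rewrite has_filter => /negbT; rewrite negbK.
  have Hba : anc par b a.
    case: (ltngtP kk i0) Hik => // Hc _.
      have := sorted_ltn_nth (@rA_trans _ par) root Hsort _ _ Hkk Hi0 Hc.
      by rewrite nth_index.
    by rewrite /b -Hc nth_index //; exact: anc_refl.
  have [HrtR HrtRp] := connected_rt Htree connR.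
  have HaR : a \in R.
    apply: (proj2 (HrtRp u HuR)) Hau _.
    exact: anc_trans (proj1 (HrtRp b HbR)) Hba.
  have Hab : a = b.
    apply: (anc_antisym Htree _ Hba); apply: Hdeep HaR _.
    by rewrite -anc_seq_mem.
  by rewrite filter_rcons HaR cats0 last_rcons.
rewrite Hxb.
have HbX : b \in X.
  rewrite inE Hbv andbT.
  have Hbv' : b != v by apply/eqP => E; rewrite -E HbR in HvR.
  have [c [Hp Hne Hcv]] := child_exists Hbv Hbv'.
  apply: (claim Htree Hleft Hcan HbR Hp Hne).
  apply/negP => HcR; have := Hdeep c HcR Hcv => Hcb.
  have Hbc : anc par b c by rewrite -Hp; exact: anc_par.
  by rewrite (anc_antisym Htree Hcb Hbc) eqxx in Hne.
split => // y; rewrite inE => /andP [HyC Hyv].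
apply: depth_le; apply: Hdeep => //; exact: subsetP HCR _ HyC.
Qed.
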